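(* Let $A$ and $B$ be disjoint graphs, $a\in V(A)$ with $N(a,A)=\{a_1,a_2,a_3\}$, $b\in V(B)$ with $N(b,B)=\{b_1,b_2,b_3\}$, and $G=Aa\sigma bB$ where $\sigma(a_i)=b_i$ for each $i$. Let $P$ be a $\Lambda$-factor of $G$, and let $P'$ be the subgraph of $P$ consisting of those components (3-vertex paths) of $P$ that contain at least one of the edges $a_1b_1,a_2b_2,a_3b_3$. (a1) If $v(A)\equiv 0\pmod 3$ (so $v(B)\equiv 2 \pmod 3$), then one of the following holds: (a1.1) $P'$ has exactly one component, and it has exactly two vertices in $A-a$, these being adjacent, and exactly one vertex in $B-b$; (a1.2) $P'$ has exactly two components, each having exactly one vertex in $A-a$ and exactly two vertices in $B-b$, these being adjacent; (a1.3) $P'$ has exactly three components $L_1,L_2,L_3$, where (up to renaming) $L_1$ has exactly one vertex in $A-a$ and exactly two adjacent vertices in $B-b$, and each of $L_2,L_3$ has exactly two adjacent vertices in $A-a$ and exactly one vertex in $B-b$. (a2) If $v(A)\equiv 1\pmod 3$ (so $v(B)\equiv 1\pmod 3$), then one of the following holds: (a2.1) $P'=\emptyset$; (a2.2) $P'$ has exactly two components $L_1,L_2$, where (up to renaming) $L_1$ has exactly one vertex in $A-a$ and exactly two adjacent vertices in $B-b$, and $L_2$ has exactly two adjacent vertices in $A-a$ and exactly one vertex in $B-b$; (a2.3) $P'$ has exactly three components $L_1,L_2,L_3$, and either each $L_i$ has exactly one vertex in $A-a$ and exactly two adjacent vertices in $B-b$, or each $L_i$ has exactly two adjacent vertices in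 $A-a$ and exactly one vertex in $B-b$.
   Context: Graphs are finite, undirected, without loops or multiple edges; $v(G)=|V(G)|$; $N(x,G)$ is the set of neighbours of $x$. For disjoint graphs $A,B$, vertices $a\in V(A)$, $b\in V(B)$ and a bijection $\sigma: N(a,A)\to N(b,B)$, $Aa\sigma bB$ is $(A-a)\cup(B-b)$ together with the new edges $\{x\sigma(x): x\in N(a,A)\}$. A $\Lambda$-factor of $G$ is a spanning subgraph each of whose components is a path on 3 vertices. *)

(* Defs.v *)
From mathcomp Require Import all_boot.
Set Implicit Arguments. Unset Strict Implicit. Unset Printing Implicit Defensive.

(* A finite simple graph on vertex type T (all elements of T are vertices). *)
Definition simple_graph (T : finType) (e : rel T) : Prop :=
  symmetric e /\ irreflexive e.

Definition nbhd (T : finType) (e : rel T) (x : T) : {set T} := [set y | e x y].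

(* A and B are made disjoint by taking the vertex
   type TA + TB; the vertex set is (A - a) u (B - b), and the edges are those
   of A - a, of B - b, and the new edges x sigma(x) for x in N(a, A). *)
Definition glue_vertices (TA TB : finType) (a : TA) (b : TB) : {set TA + TB} :=
  [set v | (v != inl a) && (v != inr b)].

Definition glue_rel (TA TB : finType) (eA : rel TA) (eB : rel TB)
    (a : TA) (b : TB) (sigma : TA -> TB) : rel (TA + TB) :=
  fun u v => match u, v with
  | inl x, inl y => [&& x != a, y != a & eA x y]
  | inr x, inr y => [&& x != b, y != b & eB x y]
  | inl x, inr y => eA a x && (sigma x == y)
  | inr y, inl x => eA a x && (sigma x == y)
  end.

(* A path on three vertices, given as an ordered triple (x, y, z) with
   edges xy and yz. *)
Definition p3_verts (T : finType) (t : T * T * T) : {set T} :=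
  [set t.1.1; t.1.2; t.2].

Definition p3_edge (T : finType) (t : T * T * T) (u v : T) : bool :=
  let: (x, y, z) := t in
  [|| (x == u) && (y == v), (y == u) && (x == v),
      (y == u) && (z == v) | (z == u) && (y == v)].

Definition is_p3 (T : finType) (e : rel T) (t : T * T * T) : bool :=
  let: (x, y, z) := t in [&& x != y, y != z, x != z, e x y & e y z].

(* A Lambda-factor of the graph (VG, e): a spanning subgraph whose components
   are 3-vertex paths, represented by the set of its components. *)
Definition Lambda_factor (T : finType) (VG : {set T}) (e : rel T)
    (P : {set T * T * T}) : Prop :=
  [/\ (forall t, t \in P -> is_p3 e t /\ p3_verts t \subset VG),
      (forall t1 t2, t1 \in P -> t2 \in P -> t1 != t2 ->
          [disjoint p3_verts t1 & p3_verts t2])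
    & (forall v, v \in VG -> exists2 t, t \in P & v \in p3_verts t)].

Definition is_left (TA TB : Type) (v : TA + TB) : bool :=
  if v is inl _ then true else false.

Definition twoA_oneB (TA TB : finType) (L : (TA + TB) * (TA + TB) * (TA + TB)) : Prop :=
  [/\ #|[set v in p3_verts L | is_left v]| = 2,
      #|[set v in p3_verts L | ~~ is_left v]| = 1
    & exists u v, [&& u \in p3_verts L, v \in p3_verts L, is_left u, is_left v
                    & p3_edge L u v]].

Definition oneA_twoB (TA TB : finType) (L : (TA + TB) * (TA + TB) * (TA + TB)) : Prop :=
  [/\ #|[set v in p3_verts L | is_left v]| = 1,
      #|[set v in p3_verts L | ~~ is_left v]| = 2
    & exists u v, [&& u \in p3_verts L, v \in p3_verts L, ~~ is_left u,
                    ~~ is_left v & p3_edge L u v]].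

(* Main.v *)
Require Import Defs.
From mathcomp Require Import all_boot zify.
Set Implicit Arguments. Unset Strict Implicit. Unset Printing Implicit Defensive.

Lemma count_set3 (T : finType) (p : pred T) u1 u2 u3 :
  uniq [:: u1; u2; u3] -> #|[set v in [set u1; u2; u3] | p v]| = count p [:: u1; u2; u3].
Proof.
move=> U.
have -> : [set v in [set u1; u2; u3] | p v] = [set v in filter p [:: u1; u2; u3]].
  by apply/setP => v; rewrite !inE mem_filter !inE andbC orbA.
rewrite cardsE -size_filter; apply/card_uniqP; exact: filter_uniq.
Qed.




Lemma inlE (TA TB : finType) (x y : TA) : (@inl TA TB x == inl y) = (x == y).
Proof. by apply/eqP/eqP => [[]|->]. Qed.
Lemma inrE (TA TB : finType) (x y : TB) : (@inr TA TB x == inr y) = (x == y).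
Proof. by apply/eqP/eqP => [[]|->]. Qed.
Lemma inlrE (TA TB : finType) (x : TA) (y : TB) : (inl x == inr y) = false.
Proof. by apply/eqP. Qed.
Lemma inrlE (TA TB : finType) (x : TA) (y : TB) : (inr y == inl x) = false.
Proof. by apply/eqP. Qed.
Lemma left_card (TA TB : finType) (a : TA) (b : TB) :
  #|[set v in glue_vertices a b | Defs.is_left v]| = #|TA|.-1.
Proof.
have -> : [set v in glue_vertices a b | Defs.is_left v] = inl @: [set~ a].
  apply/setP => [[x|y]]; rewrite !inE /=.
  - apply/idP/imsetP => [H|[z Hz [->]]].
      by exists x; move: H; rewrite ?inE ?inlE ?andbT.
    by move: Hz; rewrite ?inE ?inlE ?andbT.
  - rewrite andbF; apply/esym/negP => /imsetP [z _] /eqP; by rewrite inrlE.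
rewrite card_imset; last by move=> ? ? [].
by rewrite cardsC1.
Qed.

Lemma nb_cases (TA : finType) (eA : rel TA) a a1 a2 a3 x :
  nbhd eA a = [set a1; a2; a3] -> eA a x -> [\/ x = a1, x = a2 | x = a3].
Proof.
move=> N H; have: x \in nbhd eA a by rewrite inE.
rewrite N !inE => /orP [/orP [] | ] /eqP ->; [constructor 1|constructor 2|constructor 3]; done.
Qed.

Lemma sinj (TA TB : finType) (eA : rel TA) a a1 a2 a3 (b1 b2 b3 : TB) sigma u w :
  nbhd eA a = [set a1; a2; a3] -> uniq [:: b1; b2; b3] ->
  sigma a1 = b1 -> sigma a2 = b2 -> sigma a3 = b3 ->
  eA a u -> eA a w -> sigma u = sigma w -> u = w.
Proof.
move=> N Ub s1 s2 s3 /(nb_cases N) Hu /(nb_cases N) Hw.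
move: Ub; rewrite /= !inE negb_or => /and3P [/andP [n12 n13] n23 _].
by case: Hu => ->; case: Hw => -> //; rewrite ?s1 ?s2 ?s3 => E;
  move: n12 n13 n23; rewrite E ?eqxx.
Qed.

Lemma classify (TA TB : finType) (eA : rel TA) (eB : rel TB) a a1 a2 a3 b b1 b2 b3 sigma L :
  nbhd eA a = [set a1; a2; a3] -> uniq [:: b1; b2; b3] ->
  sigma a1 = b1 -> sigma a2 = b2 -> sigma a3 = b3 ->
  is_p3 (glue_rel eA eB a b sigma) L ->
  let cr := [|| p3_edge L (inl a1) (inr b1), p3_edge L (inl a2) (inr b2)
             | p3_edge L (inl a3) (inr b3)] in
  let lc := #|[set v in p3_verts L | Defs.is_left v]| in
  (~~ cr /\ (lc = 0 \/ lc = 3)) \/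
  (cr /\ ((lc = 2 /\ twoA_oneB L) \/ (lc = 1 /\ oneA_twoB L))).
Proof.
move=> N Ub s1 s2 s3; case: L => [[x y] z] /= .
case: x => x; case: y => y; case: z => z;
  move=> /and4P [nxy nyz nxz /andP [exy eyz]]; move: nxy nyz nxz exy eyz; rewrite /glue_rel /= ?inlE ?inrE ?inlrE ?inrlE => nxy nyz nxz exy eyz.
all: rewrite /p3_edge /twoA_oneB /oneA_twoB /p3_verts /= !count_set3 /=
   ?inE ?inlE ?inrE ?inlrE ?inrlE ?negb_or ?nxy ?nyz ?nxz //=.
- by left; split; [rewrite ?andbF | right].
- move/andP: eyz => [ey /eqP sz]; right.
  split; last by left; (do 2 split => //); exists (inl x), (inl y); rewrite !inE !eqxx ?orbT.
  case: (nb_cases N ey) => Ey; subst y; rewrite ?s1 ?s2 ?s3 in sz; subst z;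
   by rewrite !eqxx /= ?andbF ?orbT.
- move/andP: exy => [ex /eqP sx]; move/andP: eyz => [ez /eqP sz].
  by move: nxz; rewrite (sinj N Ub s1 s2 s3 ex ez (etrans sx (esym sz))) eqxx.
- move/andP: exy => [ex /eqP sx]; right.
  split; last by right; (do 2 split => //); exists (inr y), (inr z); rewrite !inE !eqxx ?orbT.
  case: (nb_cases N ex) => Ex; subst x; rewrite ?s1 ?s2 ?s3 in sx; subst y;
   by rewrite !eqxx /= ?andbF ?orbT.
- move/andP: exy => [ey /eqP sx]; right.
  split; last by left; (do 2 split => //); exists (inl y), (inl z); rewrite !inE !eqxx ?orbT.
  case: (nb_cases N ey) => Ey; subst y; rewrite ?s1 ?s2 ?s3 in sx; subst x;
   by rewrite !eqxx /= ?andbF ?orbT.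
- move/andP: exy => [ey /eqP sx]; move/andP: eyz => [_ /eqP sz].
  by move: nxz; rewrite -sx -sz eqxx.
- move/andP: eyz => [ez /eqP sz]; right.
  split; last by right; (do 2 split => //); exists (inr x), (inr y); rewrite !inE !eqxx ?orbT.
  case: (nb_cases N ez) => Ez; subst z; rewrite ?s1 ?s2 ?s3 in sz; subst y;
   by rewrite !eqxx /= ?andbF ?orbT.
- by left; split; [|left].
Qed.

Lemma sum_partition (T : finType) (VG : {set T}) (P : {set T * T * T}) (p : pred T) :
  (forall t, t \in P -> p3_verts t \subset VG) ->
  (forall t1 t2, t1 \in P -> t2 \in P -> t1 != t2 ->
     [disjoint p3_verts t1 & p3_verts t2]) ->
  (forall v, v \in VG -> exists2 t, t \in P & v \in p3_verts t) ->
  #|[set v in VG | p v]| = \sum_(L in P) #|[set v in p3_verts L | p v]|.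
Proof.
move=> Hsub Hdis Hcov.
set LV := [set v in VG | p v].
set S := fun L => [set v in p3_verts L | p v].
have E1 : forall L, L \in P -> #|S L| = \sum_(v in LV) (v \in S L : nat).
  move=> L HL; rewrite (big_setID (S L)) /= [X in _ + X]big1 ?addn0; last first.
    by move=> v; rewrite !inE => /andP [/negbTE ->].
  rewrite (eq_bigr (fun _ => 1)); last by move=> v; rewrite inE => /andP [_ ->].
  rewrite sum1_card; suff -> : LV :&: S L = S L by []. apply/setIidPr/subsetP => v.
  rewrite inE => /andP [Hv pv]; rewrite inE pv andbT.
  exact: (subsetP (Hsub L HL)).
rewrite (eq_bigr _ E1) exchange_big /= -sum1_card.
apply: eq_bigr => v; rewrite inE => /andP [Hv pv].
have [L0 HL0 HvL0] := Hcov v Hv.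
rewrite (bigD1 L0) //= big1 ?addn0; first by rewrite inE HvL0 pv.
move=> L /andP [HL nL]; rewrite inE.
by rewrite (disjointFl (Hdis L L0 HL HL0 nL) HvL0).
Qed.

Lemma p3_edge_mem (T : finType) (L : T * T * T) u v :
  p3_edge L u v -> u \in p3_verts L.
Proof.
case: L => [[x y] z]; rewrite /p3_edge /p3_verts /= !inE.
by case/or4P => /andP [/eqP <- _]; rewrite eqxx ?orbT.
Qed.

Lemma card_Q_le1 (T : finType) (P : {set T * T * T}) u v :
  (forall t1 t2, t1 \in P -> t2 \in P -> t1 != t2 ->
     [disjoint p3_verts t1 & p3_verts t2]) ->
  #|[set L in P | p3_edge L u v]| <= 1.
Proof.
move=> Hdis; rewrite leqNgt; apply/negP => /card_gt1P [L1 [L2 [H1 H2 n12]]].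
move: H1 H2; rewrite !inE => /andP [P1 E1] /andP [P2 E2].
by move: (p3_edge_mem E2); rewrite (disjointFr (Hdis _ _ P1 P2 n12) (p3_edge_mem E1)).
Qed.

Theorem mainTheorem6 (TA TB : finType) (eA : rel TA) (eB : rel TB)
  (a a1 a2 a3 : TA) (b b1 b2 b3 : TB) (sigma : TA -> TB)
  (P : {set (TA + TB) * (TA + TB) * (TA + TB)}) :
  simple_graph eA -> simple_graph eB ->
  uniq [:: a1; a2; a3] -> nbhd eA a = [set a1; a2; a3] ->
  uniq [:: b1; b2; b3] -> nbhd eB b = [set b1; b2; b3] ->
  sigma a1 = b1 -> sigma a2 = b2 -> sigma a3 = b3 ->
  Lambda_factor (glue_vertices a b) (glue_rel eA eB a b sigma) P ->
  let P' := [set L in P | [|| p3_edge L (inl a1) (inr b1),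
                              p3_edge L (inl a2) (inr b2)
                            | p3_edge L (inl a3) (inr b3)]] in
  (#|TA| %% 3 = 0 ->
     [\/ #|P'| = 1 /\ (forall L, L \in P' -> twoA_oneB L),
         #|P'| = 2 /\ (forall L, L \in P' -> oneA_twoB L)
       | #|P'| = 3 /\ exists2 L1, L1 \in P' & oneA_twoB L1 /\
             (forall L, L \in P' -> L != L1 -> twoA_oneB L)]) /\
  (#|TA| %% 3 = 1 ->
     [\/ P' = set0,
         #|P'| = 2 /\ exists L1 L2, [/\ L1 \in P', L2 \in P', oneA_twoB L1 & twoA_oneB L2]
       | #|P'| = 3 /\ ((forall L, L \in P' -> oneA_twoB L) \/
                        (forall L, L \in P' -> twoA_oneB L))]).
Proof.
move=> sA sB Ua N Ub Nb s1 s2 s3 [Hp3 Hdis Hcov] P'.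
have Hsum := sum_partition (@Defs.is_left TA TB) (fun t Ht => (Hp3 t Ht).2) Hdis Hcov.
rewrite left_card in Hsum.
have HP' : forall L, L \in P' ->
    (#|[set v in p3_verts L | Defs.is_left v]| = 2 /\ twoA_oneB L) \/
    (#|[set v in p3_verts L | Defs.is_left v]| = 1 /\ oneA_twoB L).
  move=> L; rewrite inE => /andP [HL cr].
  case: (classify (eB:=eB) (b:=b) N Ub s1 s2 s3 (Hp3 L HL).1) => [[ncr _]|[_ H]] //.
  by rewrite cr in ncr.
set B := [set L : (TA + TB) * (TA + TB) * (TA + TB) | [|| p3_edge L (inl a1) (inr b1),
                              p3_edge L (inl a2) (inr b2)
                            | p3_edge L (inl a3) (inr b3)]].
rewrite (big_setID B) /= in Hsum.
have EP' : P :&: B = P' by apply/setP => L; rewrite !inE.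
rewrite EP' in Hsum.
have D3 : 3 %| \sum_(L in P :\: B) #|[set v in p3_verts L | Defs.is_left v]|.
  apply: dvdn_sum => L; rewrite in_setD inE => /andP [nB HL].
  case: (classify (eB:=eB) (b:=b) N Ub s1 s2 s3 (Hp3 L HL).1) => [[_ [->|->]]|[cr _]] //.
  by rewrite cr in nB.
set S2 := [set L : (TA + TB) * (TA + TB) * (TA + TB) |
             #|[set v in p3_verts L | Defs.is_left v]| == 2].
rewrite (big_setID S2) /= in Hsum.
have E2 : \sum_(L in P' :&: S2) #|[set v in p3_verts L | Defs.is_left v]| =
          #|P' :&: S2| * 2.
  by rewrite -sum_nat_const; apply: eq_bigr => L; rewrite in_setI => /andP [_]; rewrite inE => /eqP.
have E1 : \sum_(L in P' :\: S2) #|[set v in p3_verts L | Defs.is_left v]| =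
          #|P' :\: S2| * 1.
  rewrite -sum_nat_const; apply: eq_bigr => L; rewrite in_setD => /andP [n2 HL]; rewrite inE in n2.
  by case: (HP' L HL) => [[E _]|[E _]] //; rewrite E in n2.
rewrite E1 E2 in Hsum.
move/dvdnP: D3 => [k Hk]; rewrite Hk in Hsum.
have Hpq := cardsID S2 P'.
have pos : 0 < #|TA| by apply/card_gt0P; exists a.
have HP'3 : #|P'| <= 3.
  have sub : P' \subset [set L in P | p3_edge L (inl a1) (inr b1)] :|:
     [set L in P | p3_edge L (inl a2) (inr b2)] :|: [set L in P | p3_edge L (inl a3) (inr b3)].
    apply/subsetP => L; rewrite !inE => /andP [HL /or3P [] ->]; by rewrite HL ?orbT.
  apply: (leq_trans (subset_leq_card sub)); rewrite !cardsU.
  have := card_Q_le1 (inl a1 : TA + TB) (inr b1 : TA + TB) Hdis.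
  have := card_Q_le1 (inl a2 : TA + TB) (inr b2 : TA + TB) Hdis.
  have := card_Q_le1 (inl a3 : TA + TB) (inr b3 : TA + TB) Hdis.
  move=> h3 h2 h1; apply: (leq_trans (leq_subr _ _)); rewrite -[3]/(2+1); apply: leq_add => //.
  apply: (leq_trans (leq_subr _ _)); rewrite -[2]/(1+1); exact: leq_add.
have in1 : forall L, L \in P' -> #|[set v in p3_verts L | Defs.is_left v]| = 1 ->
   L \in P' :\: S2 by move=> L HL E; rewrite in_setD HL andbT inE E.
have in2 : forall L, L \in P' -> #|[set v in p3_verts L | Defs.is_left v]| = 2 ->
   L \in P' :&: S2 by move=> L HL E; rewrite in_setI HL inE E.
have ex1 : 0 < #|P' :\: S2| -> exists2 L1, L1 \in P' :\: S2 & oneA_twoB L1.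
  move/card_gt0P => [L HL']; move: (HL'); rewrite in_setD => /andP [n2 HL]; rewrite inE in n2.
  by exists L => //; case: (HP' L HL) => [[E _]|[_ H]] //; rewrite E in n2.
have ex2 : 0 < #|P' :&: S2| -> exists2 L2, L2 \in P' & twoA_oneB L2.
  move/card_gt0P => [L HL]; move: HL; rewrite in_setI => /andP [HL n2]; rewrite inE in n2.
  by exists L => //; case: (HP' L HL) => [[_ H]|[E _]] //; rewrite E in n2.
have no1 : #|P' :\: S2| = 0 -> forall L, L \in P' -> twoA_oneB L.
  move=> q0 L HL; case: (HP' L HL) => [[_ H]|[E _]] //.
  by have := in1 L HL E; rewrite (cards0_eq q0) in_set0.
have no2 : #|P' :&: S2| = 0 -> forall L, L \in P' -> oneA_twoB L.
  move=> p0 L HL; case: (HP' L HL) => [[E _]|[_ H]] //.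
  by have := in2 L HL E; rewrite (cards0_eq p0) in_set0.
move: Hsum Hpq in1 ex1 ex2 no1 no2.
set p := #|P' :&: S2|; set q := #|P' :\: S2| => Hsum Hpq in1 ex1 ex2 no1 no2.
split => H.
- have : (p = 1 /\ q = 0) \/ (p = 0 /\ q = 2) \/ (p = 2 /\ q = 1) by clearbody p q; move: Hsum H pos HP'3 Hpq; clear; move: #|TA| => n; move: #|P'| => m; lia.
  case => [[p1 q0]|[[p0 q2]|[p2 q1]]].
  + constructor 1; split; [rewrite -Hpq; lia | exact: no1 q0].
  + constructor 2; split; [rewrite -Hpq; lia | exact: no2 p0].
  + constructor 3; split; first by rewrite -Hpq; lia.
    have [L1 H1 O1] := ex1 (ltac:(lia)).
    exists L1; first by move: H1; rewrite in_setD => /andP [].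
    split => // L HL nL.
    case: (HP' L HL) => [[_ H']|[E _]] //.
    have /cards1P [X EX] : q == 1 by apply/eqP.
    have := in1 L HL E; rewrite /q EX inE => /eqP eL.
    move: H1; rewrite EX inE => /eqP e1.
    by rewrite eL e1 eqxx in nL.
- have : (p = 0 /\ q = 0) \/ (p = 1 /\ q = 1) \/ (p = 0 /\ q = 3) \/ (p = 3 /\ q = 0) by clearbody p q; move: Hsum H pos HP'3 Hpq; clear; move: #|TA| => n; move: #|P'| => m; lia.
  case => [[p0 q0]|[[p1 q1]|[[p0 q3]|[p3 q0]]]].
  + constructor 1; apply: cards0_eq; by rewrite -Hpq p0 q0.
  + constructor 2; split; first by rewrite -Hpq; lia.
    have [L1 H1 O1] := ex1 (ltac:(lia)); have [L2 H2 O2] := ex2 (ltac:(lia)).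
    by exists L1, L2; split => //; move: H1; rewrite in_setD => /andP [].
  + constructor 3; split; [rewrite -Hpq; lia | left; exact: no2 p0].
  + constructor 3; split; [rewrite -Hpq; lia | right; exact: no1 q0].
Qed.
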